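(* Let $G=(V,E)$ be a graph with at least one edge and let $uv\in E$. Set $l_{uv}=|N(u)\cup N(v)|$, $m_u=|N[u]|$, $m_v=|N[v]|$. Then $$\frac{1}{2^{l_{uv}-2}+2^{l_{uv}-m_u}+2^{l_{uv}-m_v}+1}\le\frac{\sigma_0\big(G-(N[v]\cup N[u])\big)}{\sigma_0(G)}\le 1-\frac{\sigma_0(G-v)}{\sigma_0(G)}.$$ In particular, $$\frac{\sigma_0\big(G-(N[v]\cup N[u])\big)}{\sigma_0(G)}\ge\frac{1}{3\cdot 2^{l_{uv}-2}+1}.$$
   Context: All graphs are finite and simple. $\sigma_0(G)$ denotes the number of independent vertex sets of $G$ (including the empty set). $N(v)$ is the set of neighbours of $v$ and $N[v]=N(v)\cup\{v\}$. For $S\subseteq V$, $G-S$ is the subgraph induced by $V\setminus S$, and $G-v=G-\{v\}$; the graph with no vertices has $\sigma_0=1$. *)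

(* Defs.v *)
(* A simple graph is a symmetric irreflexive relation e on a finType T. *)
From mathcomp Require Import all_boot all_order all_algebra.
Set Implicit Arguments. Unset Strict Implicit. Unset Printing Implicit Defensive.

Section Graph.
Variables (T : finType) (e : rel T).

Definition independent (I : {set T}) : bool :=
  [forall x in I, forall y in I, ~~ e x y].

Definition sigma0_on (S : {set T}) : nat :=
  #|[set I : {set T} | (I \subset S) && independent I]|.

Definition sigma0 : nat := sigma0_on setT.

Definition sigma0_del (X : {set T}) : nat := sigma0_on (~: X).

Definition nbhd (v : T) : {set T} := [set w | e v w].
Definition cnbhd (v : T) : {set T} := v |: nbhd v.
End Graph.

(* Main.v *)
Require Import Defs.
From mathcomp Require Import all_boot all_order all_algebra.
From mathcomp Require Import zify.
Import Order.TTheory GRing.Theory Num.Theory.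
Local Open Scope ring_scope.

Section Aux.
Variables (T : finType) (e : rel T).
Hypotheses (esym : symmetric e) (eirr : irreflexive e).

Lemma independentP (I : {set T}) :
  reflect (forall x y, x \in I -> y \in I -> ~~ e x y) (independent e I).
Proof.
apply: (iffP idP) => [/forall_inP H x y xI yI | H].
  exact: (forall_inP (H x xI)).
apply/forall_inP => x xI; apply/forall_inP => y yI; exact: H.
Qed.

Lemma indep0 : independent e set0.
Proof. by apply/independentP => x y; rewrite inE. Qed.

Lemma sigma0_on_gt0 (S : {set T}) : (0 < sigma0_on e S)%N.
Proof.
rewrite /sigma0_on card_gt0; apply/set0Pn; exists set0.
by rewrite inE sub0set indep0.
Qed.

Lemma upper_nat (v : T) (X : {set T}) : cnbhd e v \subset X ->
  (sigma0_del e X + sigma0_del e [set v] <= sigma0 e)%N.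
Proof.
move=> sX.
set S := [set I : {set T} | (I \subset setT) && independent e I].
set P := [set I : {set T} | v \in I].
have -> : sigma0 e = #|S| by [].
rewrite /sigma0_del -(cardsID P S) leq_add //.
  rewrite /sigma0_on.
  rewrite -(card_in_imset (f := fun J => v |: J)).
    apply: subset_leq_card; apply/subsetP => I /imsetP [J].
    rewrite inE => /andP [JX Ji] ->.
    rewrite !inE subsetT /= eqxx andbT.
    apply/independentP => x y; rewrite !inE.
    have nJ : forall z, z \in J -> ~~ e v z.
      move=> z zJ; apply/negP => evz.
      have : z \in X by apply: (subsetP sX); rewrite !inE evz orbT.
      by move/(subsetP JX): zJ; rewrite inE => /negbTE ->.
    case/orP => [/eqP -> | xJ]; case/orP => [/eqP -> | yJ].
    - by rewrite eirr.
    - exact: nJ.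
    - by rewrite esym; exact: nJ.
    - exact: (independentP _ Ji).
  move=> J1 J2; rewrite !inE => /andP [J1X _] /andP [J2X _] E.
  have vn : forall J : {set T}, J \subset ~: X -> v \notin J.
    move=> J JX; apply/negP => /(subsetP JX); rewrite inE.
    by rewrite (subsetP sX) // !inE eqxx.
  by rewrite -(setU1K (vn _ J1X)) -(setU1K (vn _ J2X)) E.
rewrite /sigma0_on; apply: subset_leq_card; apply/subsetP => I.
rewrite !inE => /andP [IX ->]; rewrite subsetT andbT.
rewrite andbT; apply/negP => vI; move: (subsetP IX v vI); by rewrite !inE eqxx.
Qed.

Lemma fam_bound (F : {set {set T}}) (x : T) (X : {set T}) :
  (forall J, J \in F -> x \in J /\ J :\ x \subset X) -> (#|F| <= 2 ^ #|X|)%N.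
Proof.
move=> H; rewrite -card_powerset -(card_in_imset (f := fun J => J :\ x) (D := mem F)).
  apply: subset_leq_card; apply/subsetP => K /imsetP [J JF ->].
  by rewrite powersetE; case: (H J JF).
move=> J1 J2 /H [x1 _] /H [x2 _] E.
by rewrite -(setD1K x1) -(setD1K x2) E.
Qed.

Lemma fam_bound2 (F : {set {set T}}) (X : {set T}) :
  (forall J, J \in F -> J \subset X) -> (#|F| <= 2 ^ #|X|)%N.
Proof.
move=> H; rewrite -card_powerset; apply: subset_leq_card.
by apply/subsetP => J /H; rewrite powersetE.
Qed.

Lemma lower_nat (W : {set T}) :
  (sigma0 e <= #|[set J : {set T} | (J \subset W) && independent e J]|
               * sigma0_del e W)%N.
Proof.
set SW := [set J : {set T} | (J \subset W) && independent e J].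
rewrite /sigma0 /sigma0_del /sigma0_on -cardsX.
set S := [set I : {set T} | _].
rewrite -(card_in_imset (f := fun I => (I :&: W, I :\: W))).
  apply: subset_leq_card; apply/subsetP => p /imsetP [I].
  rewrite inE => /andP [_ Ii] ->.
  rewrite !inE subsetIr /=.
  apply/and3P; split; last 2 first.
  - by rewrite setDE subsetIr.
  - apply/independentP => x y; rewrite !inE.
    by move=> /andP [_ xI] /andP [_ yI]; exact: (independentP _ Ii).
  apply/independentP => x y; rewrite !inE.
    by move=> /andP [xI _] /andP [yI _]; exact: (independentP _ Ii).
move=> I1 I2 _ _ [E1 E2].
by rewrite -(setID I1 W) -(setID I2 W) E1 E2.
Qed.

Lemma SW_bound (u v : T) (W : {set T}) : e u v ->
  cnbhd e u \subset W -> cnbhd e v \subset W ->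
  (#|[set J : {set T} | (J \subset W) && independent e J]| <=
   2 ^ (#|W| - 2) + 2 ^ (#|W| - #|cnbhd e u|) + 2 ^ (#|W| - #|cnbhd e v|))%N.
Proof.
move=> huv sU sV.
have uv : u != v by apply/eqP => E; move: huv; rewrite E eirr.
set SW := [set J : {set T} | _].
set Pu := [set J : {set T} | u \in J].
set Pv := [set J : {set T} | v \in J].
have cD : forall A : {set T}, A \subset W -> #|W :\: A| = (#|W| - #|A|)%N.
  by move=> A sA; rewrite cardsD (setIidPr sA).
have hN : (#|(SW :\: Pu) :\: Pv| <= 2 ^ (#|W| - 2))%N.
  have c2 : #|[set u; v]| = 2%N by rewrite cards2 uv.
  rewrite -{2}c2 -cD.
    apply: fam_bound2 => J; rewrite !inE => /andP [nv /andP [nu /andP [JW _]]].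
    apply/subsetP => x xJ; rewrite !inE (subsetP JW) // andbT negb_or.
    by apply/andP; split; apply/eqP => E; [move: nu | move: nv]; rewrite -E xJ.
  apply/subsetP => x; rewrite !inE => /orP [] /eqP ->.
    by apply: (subsetP sU); rewrite !inE eqxx.
  by apply: (subsetP sV); rewrite !inE eqxx.
have hU : (#|SW :&: Pu| <= 2 ^ (#|W| - #|cnbhd e u|))%N.
  rewrite -cD //; apply: (@fam_bound _ u) => J.
  rewrite !inE => /andP [/andP [JW Ji] uJ]; split => //.
  apply/subsetP => x; rewrite !inE => /andP [xu xJ].
  rewrite (subsetP JW) // andbT negb_or xu /=.
  exact: (independentP _ Ji).
have hV : (#|(SW :\: Pu) :&: Pv| <= 2 ^ (#|W| - #|cnbhd e v|))%N.
  rewrite -cD //; apply: (@fam_bound _ v) => J.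
  rewrite !inE => /andP [/andP [_ /andP [JW Ji]] vJ]; split => //.
  apply/subsetP => x; rewrite !inE => /andP [xv xJ].
  rewrite (subsetP JW) // andbT negb_or xv /=.
  exact: (independentP _ Ji).
rewrite -(cardsID Pu SW) -(cardsID Pv (SW :\: Pu)).
lia.
Qed.

End Aux.

Theorem mainTheorem14 (T : finType) (e : rel T)
  (esym : symmetric e) (eirr : irreflexive e) (u v : T) (huv : e u v) :
  let l := #|nbhd e u :|: nbhd e v|%N in
  let mu := #|cnbhd e u|%N in
  let mv := #|cnbhd e v|%N in
  let ratio := (sigma0_del e (cnbhd e v :|: cnbhd e u))%:R / (sigma0 e)%:R : rat in
  [/\ (2 ^+ (l - 2) + 2 ^+ (l - mu) + 2 ^+ (l - mv) + 1)^-1 <= ratio,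
      ratio <= 1 - (sigma0_del e [set v])%:R / (sigma0 e)%:R
    & (3 * 2 ^+ (l - 2) + 1)^-1 <= ratio].
Proof.
set W := cnbhd e v :|: cnbhd e u.
have EW : nbhd e u :|: nbhd e v = W.
  apply/setP => x; rewrite !inE.
  case: (eqVneq x v) => [->|_]; first by rewrite huv.
  case: (eqVneq x u) => [->|_]; first by rewrite esym huv !orbT.
  by rewrite orbC.
move=> l mu mv ratio.
have sU : cnbhd e u \subset W by rewrite subsetUr.
have sV : cnbhd e v \subset W by rewrite subsetUl.
have hl : l = #|W| by rewrite /l EW.
set K := (2 ^ (l - 2) + 2 ^ (l - mu) + 2 ^ (l - mv))%N.
have Hlow : (sigma0 e <= K * sigma0_del e W)%N.
  apply: leq_trans (@lower_nat _ e W) _; rewrite leq_mul2r /K hl.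
  by rewrite (@SW_bound _ e eirr u v W huv sU sV) orbT.
have Hup := @upper_nat _ e esym eirr v W sV.
have s0 : (0 < sigma0 e)%N by exact: sigma0_on_gt0.
have A0 : (0 < sigma0_del e W)%N by exact: sigma0_on_gt0.
have s0r : 0 < (sigma0 e)%:R :> rat by rewrite ltr0n.
have E1 : (2 ^+ (l - 2) + 2 ^+ (l - mu) + 2 ^+ (l - mv) + 1 : rat) = (K.+1)%:R.
  by rewrite /K -[RHS]natr1 !natrD !natrX.
have E3 : (3 * 2 ^+ (l - 2) + 1 : rat) = (3 * 2 ^ (l - 2)).+1%:R.
  by rewrite -[RHS]natr1 natrM natrX.
have H1 : (K.+1%:R : rat)^-1 <= ratio.
  rewrite /ratio ler_pdivlMr // mulrC ler_pdivrMr ?ltr0n // -natrM ler_nat.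
  by rewrite mulnC (leq_trans Hlow) // leq_mul2r leqnSn orbT.
split.
- by rewrite E1.
- rewrite /ratio lerBrDr -mulrDl ler_pdivrMr // mul1r -natrD ler_nat.
  exact: Hup.
- rewrite E3; apply: le_trans H1.
  rewrite lef_pV2 ?posrE ?ltr0n // ler_nat ltnS /K.
  have mu2 : (2 <= mu)%N.
    have c : #|[set u; v]| = 2%N.
      by rewrite cards2; case: eqP => // E; move: huv; rewrite E eirr.
    rewrite /mu -c.
    by apply: subset_leq_card; apply/subsetP => x; rewrite !inE => /orP [] /eqP ->;
       rewrite ?eqxx // huv orbT.
  have mv2 : (2 <= mv)%N.
    have c : #|[set v; u]| = 2%N.
      by rewrite cards2; case: eqP => // E; move: huv; rewrite E eirr.
    rewrite /mv -c.
    by apply: subset_leq_card; apply/subsetP => x; rewrite !inE => /orP [] /eqP ->;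
       rewrite ?eqxx // esym huv orbT.
  have a1 : (2 ^ (l - mu) <= 2 ^ (l - 2))%N by rewrite leq_pexp2l // leq_sub2l.
  have a2 : (2 ^ (l - mv) <= 2 ^ (l - 2))%N by rewrite leq_pexp2l // leq_sub2l.
  lia.
Qed.
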